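(* Let $r<s$ be positive integers with $r\ge 2$, and let $x$ be a non-negative integer whose $r$-canonical representation is $[x]^r=\binom{n}{r}+\binom{m}{r-1}+\binom{t}{r-2}$ (so $n>m>t$). Suppose there is an integer $w$ with $\binom{t}{r-2}=\binom{w}{r-1}$, $s-2>t$ and $s-1>w$. Then $$k_s(k_r\le x)=[x]^r_s=\binom{n}{s}+\binom{m}{s-1}.$$ Moreover, for every integer $y$ with $\binom{n}{r}+\binom{m}{r-1}\le y\le x$ we have $k_s(k_r\le y)=[y]^r_s=\binom{n}{s}+\binom{m}{s-1}$.
   Context: All graphs are finite simple graphs. For a graph $g$ and an integer $r>1$, $k_r(g)$ denotes the number of subgraphs of $g$ isomorphic to the complete graph $K_r$ (equivalently, the number of $r$-vertex cliques of $g$). For $r<s$ and a non-negative integer $x$, $k_s(k_r\le x)$ denotes the maximum of $k_s(g)$ over all graphs $g$ with $k_r(g)\le x$. The $r$-canonical representation $[x]^r$ of a non-negative integer $x$ is obtained greedily: choose $a_r$ as large as possible with $\binom{a_r}{r}\le x$, then $a_{r-1}$ as large as possible with $\binom{a_{r-1}}{r-1}\le x-\binom{a_r}{r}$, and so on, until $x=\binom{a_r}{r}+\binom{a_{r-1}}{r-1}+\dots+\binom{a_{r-j}}{r-j}$; one has $a_r>a_{r-1}>\dots>a_{r-j}$. For $r<s$, $[x]^r_s$ denotes the number obtained by replacing $r$ by $s$ in this representation: $[x]^r_s=\binom{a_r}{s}+\binom{a_{r-1}}{s-1}+\dots+\binom{a_{r-j}}{s-j}$. A binomial coefficient whose top entry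 is less than its bottom entry is taken to be $0$. *)

(* Defs.v *)
From mathcomp Require Import all_boot.
Set Implicit Arguments. Unset Strict Implicit. Unset Printing Implicit Defensive.

Definition simple_graph (T : finType) (e : rel T) : Prop :=
  symmetric e /\ irreflexive e.

Definition is_clique (T : finType) (e : rel T) (A : {set T}) : bool :=
  [forall x in A, forall y in A, (x != y) ==> e x y].

Definition kcl (T : finType) (e : rel T) (r : nat) : nat :=
  #|[set A : {set T} | (#|A| == r) && is_clique e A]|.

(* "k_s(k_r <= x) = v": v is the maximum of k_s(g) over all finite simple
   graphs g with k_r(g) <= x (attained, and an upper bound). *)
Definition ks_kr_max (r s x v : nat) : Prop :=
  (exists (T : finType) (e : rel T),
      simple_graph e /\ kcl e r <= x /\ kcl e s = v) /\
  (forall (T : finType) (e : rel T),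
      simple_graph e -> kcl e r <= x -> kcl e s <= v).

(* largest a with 'C(a, k) <= rem  (for k >= 1 such a satisfies a < rem + k + 1) *)
Definition maxbinom (k rem : nat) : nat :=
  \max_(a < rem + k + 1 | 'C(a, k) <= rem) a.

(* Greedy k-canonical representation of rem: list of pairs (a_j, j), j
   decreasing from k, stopping as soon as the remainder is 0. *)
Fixpoint greedy (k rem : nat) : seq (nat * nat) :=
  match k with
  | 0 => [::]
  | k'.+1 =>
      if rem == 0 then [::]
      else let a := maxbinom k rem in
           (a, k) :: greedy k' (rem - 'C(a, k))
  end.

Definition canon (r x : nat) : seq (nat * nat) := greedy r x.

Definition canon_shift (r s x : nat) : nat :=
  \sum_(p <- canon r x) 'C(p.1, p.2 + (s - r)).

(* Main.v *)
Require Import Defs.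
From mathcomp Require Import all_boot zify.
Set Implicit Arguments. Unset Strict Implicit. Unset Printing Implicit Defensive.

Section Comp.
Variable T : finType.
Implicit Types (F G : {set {set T}}) (A B : {set T}) (x v y : T).

Definition shadow F : {set {set T}} :=
  [set B | [exists A in F, exists y in A, B == A :\ y]].

Definition cmove x v F A : {set T} :=
  if (x \in A) && (v \notin A) && (v |: (A :\ x) \notin F) then v |: (A :\ x) else A.

Definition compr x v F : {set {set T}} := (cmove x v F) @: F.

Definition stable x v F := forall A, A \in F -> x \in A -> v \notin A -> v |: (A :\ x) \in F.

Lemma shadowP F B : reflect (exists A y, [/\ A \in F, y \in A & B = A :\ y]) (B \in shadow F).
Proof.
rewrite inE; apply: (iffP existsP).
  by case=> A /andP[AF /existsP[y /andP[yA /eqP->]]]; exists A, y.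
by case=> A [y [AF yA ->]]; exists A; rewrite AF; apply/existsP; exists y; rewrite yA eqxx.
Qed.

Lemma shadow_in F A y : A \in F -> y \in A -> A :\ y \in shadow F.
Proof. by move=> AF yA; apply/shadowP; exists A, y. Qed.

Lemma cmove_v x v F A : v \notin cmove x v F A -> cmove x v F A = A.
Proof.
rewrite /cmove; case: ifP => // _; by rewrite !inE eqxx.
Qed.

Lemma cmove_fix x v F A : v \in A -> cmove x v F A = A.
Proof. by rewrite /cmove => ->; rewrite andbF. Qed.

Lemma comp_in_v x v F A : A \in F -> v \in A -> A \in compr x v F.
Proof. by move=> AF vA; apply/imsetP; exists A => //; rewrite cmove_fix. Qed.

Lemma comp_inj x v F : {in F &, injective (cmove x v F)}.
Proof.
move=> A B AF BF; rewrite /cmove.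
case: ifP => [/andP[/andP[xA vA] nF]|hA]; case: ifP => [/andP[/andP[xB vB] nF']|hB].
- move=> E; apply/setP => z; have := congr1 (fun S : {set T} => z \in S) E.
  rewrite !inE; case: (z =P v) => [->|_]; first by rewrite (negPf vA) (negPf vB).
  case: (z =P x) => [->|//]; by rewrite xA xB.
- by move=> E; rewrite E BF in nF.
- by move=> E; rewrite -E AF in nF'.
- by [].
Qed.

Lemma comp_card x v F : #|compr x v F| = #|F|.
Proof. exact/card_in_imset/comp_inj. Qed.

Lemma comp_stable_new x v F : stable x v (compr x v F).
Proof.
move=> B /imsetP[A AF ->] xB vB.
have E := cmove_v vB; rewrite E in xB vB *.
move: E; rewrite /cmove xB vB /=; case: ifP => [_ E|nF _].
  by move: vB; rewrite -{1}E !inE eqxx.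
by apply: comp_in_v; [apply/negbFE | rewrite !inE eqxx].
Qed.

Lemma comp_stable_keep x y v F : stable y v F -> stable y v (compr x v F).
Proof.
move=> st B /imsetP[A AF ->] yB vB.
have E := cmove_v vB; rewrite E in yB vB *.
by apply: comp_in_v; [apply: st | rewrite !inE eqxx].
Qed.

End Comp.


Section Comp2.
Variable T : finType.
Implicit Types (F G : {set {set T}}) (A B : {set T}) (x v y : T).

Ltac splitz z :=
  repeat match goal with
  | |- context [z == ?a] => have [->|?] := eqVneq z a; rewrite ?eqxx /=
  end.

Lemma comp_in x v F A D : D \in F -> cmove x v F D = A -> A \in compr x v F.
Proof. by move=> DF <-; apply/imsetP; exists D. Qed.

Lemma cmove_nx x v F A : x \notin A -> cmove x v F A = A.
Proof. by rewrite /cmove => /negPf->. Qed.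

Lemma shadow_comp x v F : shadow (compr x v F) \subset compr x v (shadow F).
Proof.
apply/subsetP => B /shadowP[A' [y [/imsetP[A AF ->] yA' ->]]].
move: yA'; rewrite {1 2}/cmove; case: ifP => [/andP[/andP[xA vA] nF] yA'|hA yA].
-
  have xv : x != v by apply: contraNneq vA => <-.
  have [yv|yv] := eqVneq y v.
  + subst y; apply: (@comp_in _ _ _ _ (A :\ x)); first exact: shadow_in.
    rewrite cmove_nx; last by rewrite !inE eqxx.
    apply/setP => z; rewrite !inE; splitz z; by rewrite ?(negPf vA) ?(negPf xv).
  + have yA : y \in A by move: yA'; rewrite !inE (negPf yv) /= => /andP[].
    have yx : y != x by move: yA'; rewrite !inE (negPf yv) /= => /andP[].
    have xB : x \notin (v |: A :\ x) :\ y by rewrite !inE eqxx (negPf xv) andbF.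
    case Bs: ((v |: A :\ x) :\ y \in shadow F).
    * by apply: (comp_in Bs); rewrite cmove_nx.
    * apply: (@comp_in _ _ _ _ (A :\ y)); first exact: shadow_in.
      have E : v |: (A :\ y) :\ x = (v |: A :\ x) :\ y.
        apply/setP => z; rewrite !inE; splitz z; by rewrite ?(eq_sym v y) ?(negPf vA) ?(negPf xv) ?(negPf yv) ?(negPf yx) ?andbF.
      rewrite /cmove E Bs !inE xA (negPf vA) /=.
      by rewrite (eq_sym x y) yx andbF.
- have Bs := shadow_in AF yA.
  apply: (comp_in Bs); rewrite /cmove; case: ifP => // /andP[/andP[xB vB]].
  have xA : x \in A by move: xB; rewrite !inE => /andP[].
  have xy : x != y by move: xB; rewrite !inE => /andP[].
  have xv : x != v by apply: contraNneq vB => <-.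
  have [yv|yv] := eqVneq y v.
  + subst y.
    have -> : v |: (A :\ v) :\ x = A :\ x.
      apply/setP => z; rewrite !inE; splitz z; by rewrite ?(eq_sym v x) ?yA ?(negPf xv) ?andbF.
    by rewrite (shadow_in AF xA).
  + have vA : v \notin A by move: vB; rewrite !inE (eq_sym v y) (negPf yv) /=.
    have vF : v |: A :\ x \in F by move: hA; rewrite xA vA /=; case: (_ \in F).
    have yA2 : y \in v |: A :\ x by rewrite !inE yA (eq_sym y x) xy orbT.
    have -> : v |: (A :\ y) :\ x = (v |: A :\ x) :\ y.
      apply/setP => z; rewrite !inE; splitz z; by rewrite ?(eq_sym v x) ?(eq_sym v y) ?(eq_sym x y) ?(negPf xy) ?(negPf vA) ?(negPf xv) ?(negPf yv) ?andbF.
    by rewrite (shadow_in vF yA2).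
Qed.

Lemma comp_shadow_card x v F : #|shadow (compr x v F)| <= #|shadow F|.
Proof. by rewrite -(comp_card x v (shadow F)); apply: subset_leq_card; apply: shadow_comp. Qed.
End Comp2.


Fixpoint bs (l : seq nat) (k : nat) : nat :=
  if l is a :: l' then 'C(a, k) + bs l' k.-1 else 0.

Fixpoint valid (l : seq nat) (k ub : nat) : bool :=
  if l is a :: l' then [&& k <= a, a < ub, 0 < k & valid l' k.-1 a] else true.

Lemma bs_pascal l k ub : valid l k ub ->
  bs l k = bs (map predn l) k + bs (map predn l) k.-1.
Proof.
elim: l k ub => [//|a l IH] k ub /= /and4P[ka aub k0 vl].
rewrite (IH _ _ vl).
have a0 : 0 < a by lia.
case: k ka k0 vl => [//|k] ka _ vl /=.
rewrite -(prednK a0) binS /=; lia.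
Qed.

Lemma bs_split l k ub : valid l k ub ->
  bs l k.-1 = bs (map predn l) k.-1 + bs (take k.-1 (map predn l)) k.-2.
Proof.
elim: l k ub => [//|a l IH] k ub /= /and4P[ka aub k0 vl].
move: ka k0 vl; case: k => [//|[|k]] ka _ vl /=.
- case: l {IH} vl => [|b l] /=; first by rewrite !bin0. by rewrite ?andbF.
- rewrite (IH _ _ vl) /=.
  have a0 : 0 < a by lia.
  rewrite -{1}(prednK a0) binS /=; lia.
Qed.

Lemma bs_take n l k : bs (take n l) k <= bs l k.
Proof.
elim: l n k => [|a l IH] [|n] k /=; try lia.
by rewrite leq_add2l.
Qed.

Lemma valid_take l k ub : valid l k ub -> valid (take k.-1 (map predn l)) k.-1 ub.-1.
Proof.
elim: l k ub => [//|a l IH] k ub /= /and4P[ka aub k0 vl].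
move: ka k0 vl; case: k => [//|[|k]] ka _ vl //=.
apply/and3P; split; try lia.
by have := IH _ _ vl.
Qed.

Lemma tailbound l j : valid l j j.+1 -> bs (map predn l) j.-1 <= j.
Proof.
elim: l j => [//|b l IH] j /= /and4P[jb bj j0 vl].
have bj2 : b = j by lia. subst b.
case: j jb bj j0 vl => [//|j] _ _ _ vl /=.
rewrite binn; have := IH _ vl; case: j vl => [|j] vl /=; lia.
Qed.

Lemma tailfix l k ub ub' : valid l k ub -> k < ub' -> ub <= ub'.+1 ->
  exists L, [/\ valid L k ub', bs L k <= (bs (map predn l) k).+1 &
                bs (map predn l) k.-1 <= bs L k.-1].
Proof.
elim: l k ub ub' => [|a l IH] k ub ub' /=.
  by move=> _ _ _; exists [::].
move=> /and4P[ka aub k0 vl] kub' ubub'.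
have [ak|ak] := eqVneq a k.
- subst a; exists [:: k]; split => /=.
  + by rewrite leqnn kub' k0.
  + by rewrite binn addn0.
  + case: k ka aub k0 vl kub' {ubub'} => [//|k] _ _ _ vl _ /=.
    rewrite binn addn0 binSn add1n ltnS.
    by have := tailbound vl.
- have ka' : k < a by rewrite ltn_neqAle eq_sym ak ka.
  have [L [vL bL1 bL2]] := IH k.-1 a a.-1 vl ltac:(lia) ltac:(lia).
  exists (a.-1 :: L); split => /=.
  + apply/and4P; split => //; lia.
  + lia.
  + lia.
Qed.


Section KK.
Variable T : finType.
Implicit Types (F G : {set {set T}}) (A B U : {set T}) (x v y : T).

Definition unif F k U := forall A, A \in F -> #|A| = k /\ A \subset U.

Lemma compr_unif x v F k U : v \in U -> unif F k U -> unif (compr x v F) k U.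
Proof.
move=> vU hF B /imsetP[A AF ->]; have [cA sA] := hF A AF.
rewrite /cmove; case: ifP => // /andP[/andP[xA vA] _]; split.
  by rewrite cardsU1 !inE (negPf vA) andbF /= (cardsD1 x A) xA in cA *; lia.
apply/subsetP => z; rewrite !inE => /orP[/eqP->//|/andP[_ zA]].
exact: (subsetP sA).
Qed.

Definition compall v (xs : seq T) F := foldr (fun x G => compr x v G) F xs.

Lemma compall_props k U v xs F : v \in U -> unif F k U ->
  [/\ #|compall v xs F| = #|F|, #|shadow (compall v xs F)| <= #|shadow F|,
      unif (compall v xs F) k U & forall x, x \in xs -> stable x v (compall v xs F)].
Proof.
move=> vU hF; elim: xs => [|x xs [c1 c2 c3 c4]] /=.
  by split.
split.
- by rewrite comp_card.
- exact: leq_trans (comp_shadow_card _ _ _) c2.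
- exact: compr_unif.
- move=> y; rewrite inE => /orP[/eqP->|yxs]; first exact: comp_stable_new.
  exact/comp_stable_keep/c4.
Qed.


Lemma KK n : forall U k l ub F, #|U| <= n -> valid l k ub -> unif F k U ->
  bs l k <= #|F| -> bs l k.-1 <= #|shadow F|.
Proof.
elim: n => [|n IH] U k l ub F hU vl hF hb;
  (case: l vl hb => [|a l'] vl hb; first by []);
  have /and4P[ka aub k0 vl'] := vl;
  (have F0 : 0 < #|F| by apply: leq_trans hb; rewrite /= (leq_trans _ (leq_addr _ _)) // bin_gt0);
  (have [A0 A0F] : exists A0, A0 \in F by apply/set0Pn; rewrite -card_gt0);
  (have [cA0 sA0] := hF A0 A0F);
  (have [v vA0] : exists v, v \in A0 by apply/set0Pn; rewrite -card_gt0 cA0);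
  have vU := subsetP sA0 v vA0.
  by move: hU; rewrite leqn0 => /eqP/cards0_eq U0; rewrite U0 inE in vU.
set l := a :: l' in vl hb *.
pose G := compall v (enum T) F.
have [cG sG uG stG] := compall_props (enum T) vU hF.
pose Vs := [set A : {set T} | v \in A].
pose G0 := G :\: Vs. pose Gv := G :&: Vs. pose G1 := (fun A => A :\ v) @: Gv.
pose U' := U :\ v.
have hU' : #|U'| <= n by move: hU; rewrite (cardsD1 v U) vU.
have hcard : #|Gv| + #|G0| = #|G| by rewrite cardsID.
have hG1 : #|G1| = #|Gv|.
  apply: card_in_imset => A B /setIP[_]; rewrite inE => vA /setIP[_]; rewrite inE => vB E.
  by rewrite -(setD1K vA) -(setD1K vB) E.
have uG0 : unif G0 k U'.
  move=> A /setDP[AG]; rewrite inE => vA; have [cA sA] := uG A AG; split => //.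
  apply/subsetP => z zA; rewrite !inE (subsetP sA z zA) andbT.
  by apply: contraNneq vA => <-.
have uG1 : unif G1 k.-1 U'.
  move=> B /imsetP[A /setIP[AG]]; rewrite inE => vA ->; have [cA sA] := uG A AG; split.
    by move: cA; rewrite (cardsD1 v A) vA; lia.
  exact: setSD.
have sh0 : shadow G0 \subset G1.
  apply/subsetP => B /shadowP[A [y [/setDP[AG]]]]; rewrite inE => vA yA ->.
  have vG : v |: (A :\ y) \in G by apply: stG => //; rewrite mem_enum.
  apply/imsetP; exists (v |: (A :\ y)); first by rewrite inE vG !inE eqxx.
  by rewrite setU1K // !inE (negPf vA) andbF.
have shG : #|G1| + #|shadow G1| <= #|shadow G|.
  pose H := (fun C => v |: C) @: shadow G1.
  have nvs : forall C, C \in shadow G1 -> v \notin C.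
    by move=> C /shadowP[A1 [y [/imsetP[A _ ->] _ ->]]]; rewrite !inE eqxx !andbF.
  have hH : #|H| = #|shadow G1|.
    apply: card_in_imset => C D Cs Ds E.
    by rewrite -(setU1K (nvs C Cs)) -(setU1K (nvs D Ds)) E.
  have hI : G1 :&: H = set0.
    apply/setP => C; rewrite !inE; apply/negP => /andP[/imsetP[A _ ->] /imsetP[D _ E]].
    by move: (setU11 v D); rewrite -E !inE eqxx.
  have hS : G1 :|: H \subset shadow G.
    apply/subsetP => C; rewrite inE => /orP[/imsetP[A /setIP[AG]]|/imsetP[D]].
      by rewrite inE => vA ->; apply: shadow_in.
    move=> /shadowP[A1 [y [/imsetP[A /setIP[AG]] ]]]; rewrite inE => vA -> yA -> ->.
    have -> : v |: (A :\ v) :\ y = A :\ y.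
      apply/setP => z; rewrite !inE; case: (z =P v) => [->|] //=.
      by rewrite vA andbT; move: yA; rewrite !inE => /andP[]; rewrite eq_sym.
    by apply: shadow_in => //; move: yA; rewrite !inE => /andP[].
  have := cardsUI G1 H; rewrite hI cards0 addn0 hH => <-.
  exact: subset_leq_card.
pose P := map predn l.
have pas := bs_pascal vl.
have B1 : bs P k.-1 <= #|G1|.
  rewrite leqNgt; apply/negP => lt.
  have [L [vL bL1 bL2]] := tailfix vl (ltac:(lia) : k < ub) (leqnSn ub).
  rewrite -/P in bL1 bL2 pas.
  have hG0 : bs L k <= #|G0|.
    move: cG hcard hG1; rewrite -/G => cG' hc hg1; lia.
  have := IH U' k L ub G0 hU' vL uG0 hG0.
  have := subset_leq_card sh0. move=> a1 a2.
  by move: (leq_trans bL2 (leq_trans a2 a1)); rewrite leqNgt lt.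
have := IH U' k.-1 (take k.-1 P) ub.-1 G1 hU' (valid_take vl) uG1
  (leq_trans (bs_take _ _ _) B1).
rewrite (bs_split vl) -/P => h.
apply: leq_trans sG; apply: leq_trans shG; lia.
Qed.

End KK.


Lemma valid_down l k ub : valid l k ub -> size l < k -> valid l k.-1 ub.
Proof.
elim: l k ub => [//|a l IH] k ub /= /and4P[ka aub k0 vl] sz.
apply/and4P; split; try lia.
apply: IH => //; lia.
Qed.

Lemma valid_downN j l k ub : valid l k ub -> size l + j <= k -> valid l (k - j) ub.
Proof.
elim: j => [|j IH] vl sz; first by rewrite subn0.
rewrite subnS; apply: valid_down; first by apply: IH => //; lia.
lia.
Qed.

Section Iter.
Variable T : finType.
Implicit Types (F G : {set {set T}}) (A B U : {set T}).

Fixpoint shadowN j F := if j is j'.+1 then shadow (shadowN j' F) else F.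

Lemma shadow_unif F k U : unif F k U -> unif (shadow F) k.-1 U.
Proof.
move=> hF B /shadowP[A [y [AF yA ->]]]; have [cA sA] := hF A AF; split.
  by move: cA; rewrite (cardsD1 y A) yA; lia.
by apply: subset_trans sA; apply: subsetDl.
Qed.

Lemma shadowN_unif j F k U : unif F k U -> unif (shadowN j F) (k - j) U.
Proof.
move=> hF; elim: j => [|j IH] /=; first by rewrite subn0.
by rewrite subnS; apply: shadow_unif.
Qed.

Lemma KK_iter j l k ub F U : valid l k ub -> size l + j <= k -> unif F k U ->
  bs l k <= #|F| -> bs l (k - j) <= #|shadowN j F|.
Proof.
move=> vl sz hF hb; elim: j sz => [|j IH] sz /=; first by rewrite subn0.
rewrite subnS.
apply: (@KK T #|U| U (k - j) l ub) => //.
- apply: valid_downN => //; lia.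
- exact: shadowN_unif.
- apply: IH; lia.
Qed.

Definition Cl (e : rel T) k := [set A : {set T} | (#|A| == k) && is_clique e A].

Lemma clique_sub (e : rel T) A B : B \subset A -> is_clique e A -> is_clique e B.
Proof.
move=> sBA /forallP cA; apply/forallP => x; apply/implyP => xB.
apply/forallP => y; apply/implyP => yB.
by have /implyP := cA x => /(_ (subsetP sBA x xB)) /forallP /(_ y) /implyP /(_ (subsetP sBA y yB)).
Qed.

Lemma shadowN_Cl (e : rel T) j k : shadowN j (Cl e k) \subset Cl e (k - j).
Proof.
elim: j => [|j IH] /=; first by rewrite subn0.
apply/subsetP => B /shadowP[A [y [AF yA ->]]].
have := subsetP IH A AF; rewrite !inE => /andP[/eqP cA clA].
rewrite subnS (clique_sub _ clA) ?subsetDl // andbT.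
by move: cA; rewrite (cardsD1 y A) yA => <-.
Qed.

Lemma upper (e : rel T) r s l ub : valid l s ub -> size l + (s - r) <= s -> r <= s ->
  bs l s <= kcl e s -> bs l r <= kcl e r.
Proof.
move=> vl sz rs hb.
have hF : unif (Cl e s) s [set: T].
  by move=> A; rewrite inE => /andP[/eqP-> _]; rewrite subsetT.
have := KK_iter vl sz hF hb.
rewrite subKn // => h; apply: leq_trans h _.
by have := subset_leq_card (shadowN_Cl e (s - r) s); rewrite subKn.
Qed.

End Iter.


Lemma binom_ge k a : 0 < k -> a < 'C(a, k) + k.
Proof.
move=> k0; elim: a => [|a IH]; first lia.
case: k k0 IH => [//|k] _ IH; rewrite binS.
have [ak|ak] := leqP k a.
  have := bin_gt0 a k; rewrite ak; lia.
lia.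
Qed.

Lemma maxbinomE k rem a : 0 < k -> 'C(a, k) <= rem -> rem < 'C(a.+1, k) ->
  maxbinom k rem = a.
Proof.
move=> k0 le lt; apply/eqP; rewrite eqn_leq; apply/andP; split.
  apply/bigmax_leqP => i Pi; rewrite leqNgt; apply/negP => ai.
  have := leq_bin2l k ai; lia.
have ha : a < rem + k + 1 by have := binom_ge a k0; lia.
exact: (bigmax_sup (Ordinal ha)).
Qed.

Lemma maxbinom_spec k rem : 0 < k ->
  'C(maxbinom k rem, k) <= rem /\ rem < 'C((maxbinom k rem).+1, k).
Proof.
move=> k0.
have ex : exists a, 'C(a, k) <= rem by exists 0; rewrite bin0n; case: k k0.
have ub : forall a, 'C(a, k) <= rem -> a <= rem + k.
  by move=> a h; have := binom_ge a k0; lia.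
case: (ex_maxnP ex ub) => a Pa maxa.
have lt : rem < 'C(a.+1, k) by rewrite ltnNge; apply/negP => /maxa; lia.
by rewrite (maxbinomE k0 Pa lt).
Qed.

Lemma greedy_small j rem c : rem < 'C(c, j) ->
  all (fun p : nat * nat => p.1 + j < c + p.2) (greedy j rem).
Proof.
elim: j rem c => [//|j IH] rem c lt /=.
case: eqP => // rem0.
have [le lt2] := maxbinom_spec rem (ltn0Sn j).
set a := maxbinom j.+1 rem in le lt2 *.
have ac : a < c by rewrite ltnNge; apply/negP => ca; have := leq_bin2l j.+1 ca; lia.
apply/andP; split; first by rewrite /=; lia.
have lt3 : rem - 'C(a, j.+1) < 'C(a, j) by move: lt2; rewrite binS; lia.
have := IH _ _ lt3; apply: sub_all => p /=; lia.
Qed.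


Lemma canon_facts r x n m t : canon r x = [:: (n, r); (m, r - 1); (t, r - 2)] ->
  exists r3, [/\ r = r3.+3, 'C(n, r) + 'C(m, r - 1) + 'C(t, r - 2) <= x,
    x - 'C(n, r) - 'C(m, r - 1) < 'C(t.+1, r - 2),
    x < 'C(n.+1, r) & x - 'C(n, r) < 'C(m.+1, r - 1)] /\ m < n.
Proof.
rewrite /canon.
case: r => [|[|[|r]]] /=.
- by [].
- by case: ifP.
- by case: ifP => // _; case: ifP.
case: ifP => // x0 [<-] E1.
move: E1; case: ifP => // x1 [<-] E2.
move: E2; case: ifP => // x2 [<-] _.
exists r; rewrite !subSS !subn0.
have [l1 u1] := maxbinom_spec x (ltn0Sn r.+2).
have [l2 u2] := maxbinom_spec (x - 'C(maxbinom r.+3 x, r.+3)) (ltn0Sn r.+1).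
have [l3 u3] := maxbinom_spec (x - 'C(maxbinom r.+3 x, r.+3) - 'C(maxbinom r.+2 (x - 'C(maxbinom r.+3 x, r.+3)), r.+2)) (ltn0Sn r).
set N := maxbinom r.+3 x in l1 u1 l2 u2 l3 u3 *.
set M := maxbinom r.+2 _ in l2 u2 l3 u3 *.
set Tt := maxbinom r.+1 _ in l3 u3 *.
split; first (split => //; lia).
move: u1; rewrite binS => u1.
rewrite ltnNge; apply/negP => NM.
have := leq_bin2l r.+2 NM; lia.
Qed.


Section Constr.
Variables n m : nat.
Hypothesis mn : m < n.

Definition eG : rel 'I_n.+1 := fun i j => (i != j) && ((maxn i j < n) || (minn i j < m)).

Lemma eG_simple : simple_graph eG.
Proof.
split.
- by move=> i j; rewrite /eG eq_sym maxnC minnC.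
- by move=> i; rewrite /eG eqxx.
Qed.

Definition Nv : 'I_n.+1 := ord_max.

Lemma card_lt p : p <= n.+1 -> #|[set i : 'I_n.+1 | i < p]| = p.
Proof.
move=> pn.
have -> : [set i : 'I_n.+1 | i < p] = [set widen_ord pn j | j : 'I_p].
  apply/setP => i; rewrite inE; apply/idP/imsetP => [lt|[j _ ->]].
    by exists (Ordinal lt) => //; apply/val_inj.
  by rewrite /= ltn_ord.
by rewrite card_imset ?card_ord //; by move=> a b /(congr1 val) /= E; apply: val_inj.
Qed.

Definition S0 := [set i : 'I_n.+1 | i < n].
Definition S1 := [set i : 'I_n.+1 | i < m].

Lemma neqN (i : 'I_n.+1) : (i != Nv) = (i < n).
Proof.
have := ltn_ord i; rewrite -(inj_eq val_inj) /=; lia.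
Qed.

Lemma cliqueE A : is_clique eG A = (Nv \notin A) || (A :\ Nv \subset S1).
Proof.
apply/idP/idP.
- move=> /forallP cA; case NA: (Nv \in A) => //=.
  apply/subsetP => x; rewrite !inE => /andP[xN xA].
  have /implyP := cA x => /(_ xA) /forallP /(_ Nv) /implyP /(_ NA).
  rewrite xN /eG /= xN /=; move: xN; rewrite neqN /Nv /= => xn; lia.
- move=> h; apply/forallP => x; apply/implyP => xA; apply/forallP => y; apply/implyP => yA.
  apply/implyP => xy; rewrite /eG xy /=.
  case/orP: h => [NA|sub].
  + have xN : x != Nv by apply: contraNneq NA => <-.
    have yN : y != Nv by apply: contraNneq NA => <-.
    move: xN yN; rewrite !neqN; lia.
  + have [xN|xN] := eqVneq x Nv.
    * have yN : y != Nv by rewrite -xN eq_sym.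
      have := subsetP sub y; rewrite !inE yN yA => /(_ isT).
      rewrite xN /Nv /=; have := ltn_ord y; lia.
    * have := subsetP sub x; rewrite !inE xN xA => /(_ isT).
      have := ltn_ord y; lia.
Qed.

Lemma kcl_eG k : 0 < k -> kcl eG k = 'C(n, k) + 'C(m, k.-1).
Proof.
move=> k0; rewrite /kcl.
pose C := [set A : {set 'I_n.+1} | (#|A| == k) && is_clique eG A].
rewrite -/C.
pose Vs := [set A : {set 'I_n.+1} | Nv \in A].
rewrite -(cardsID Vs C) addnC.
congr (_ + _).
- have -> : C :\: Vs = [set A : {set 'I_n.+1} | A \subset S0 & #|A| == k].
    apply/setP => A; rewrite !inE cliqueE.
    case NA: (Nv \in A) => /=.
      apply/esym/negP => /andP[/subsetP /(_ _ NA)].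
      by rewrite inE /Nv /= ltnn.
    rewrite andbT; have -> // : A \subset S0.
    by apply/subsetP => x xA; rewrite inE -neqN; apply/eqP => E; rewrite -E xA in NA.
  by rewrite cards_draws card_lt.
- have -> : C :&: Vs =
      (fun B => Nv |: B) @: [set B : {set 'I_n.+1} | B \subset S1 & #|B| == k.-1].
    apply/setP => A; rewrite !inE cliqueE; apply/idP/imsetP.
    + move=> /andP[/andP[cA] /orP[/negP//|sub] NA].
      exists (A :\ Nv); last by rewrite setD1K.
      rewrite inE sub /=; move: cA; rewrite (cardsD1 Nv A) NA add1n => /eqP <- //.
    + move=> [B]; rewrite inE => /andP[sub cB] ->.
      have NB : Nv \notin B.
        by apply/negP => /(subsetP sub); rewrite inE /Nv /=; lia.
      rewrite !inE eqxx /= andbT cardsU1 NB (eqP cB) /=.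
      rewrite setU1K //; apply/andP; split; first lia.
      by [].
  rewrite card_in_imset; first by rewrite cards_draws card_lt //; lia.
  move=> B D; rewrite !inE => /andP[sB _] /andP[sD _] E.
  have NB : Nv \notin B by apply/negP => /(subsetP sB); rewrite inE /Nv /=; lia.
  have ND : Nv \notin D by apply/negP => /(subsetP sD); rewrite inE /Nv /=; lia.
  by rewrite -(setU1K NB) -(setU1K ND) E.
Qed.

End Constr.


Lemma greedyS k rem : greedy k.+1 rem =
  if rem == 0 then [::] else (maxbinom k.+1 rem, k.+1) :: greedy k (rem - 'C(maxbinom k.+1 rem, k.+1)).
Proof. by []. Qed.

Theorem theorem3 (r s x n m t w : nat) :
  2 <= r -> r < s ->
  canon r x = [:: (n, r); (m, r - 1); (t, r - 2)] ->
  'C(t, r - 2) = 'C(w, r - 1) ->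
  t < s - 2 -> w < s - 1 ->
  (ks_kr_max r s x ('C(n, s) + 'C(m, s - 1)) /\
   canon_shift r s x = 'C(n, s) + 'C(m, s - 1)) /\
  (forall y : nat, 'C(n, r) + 'C(m, r - 1) <= y -> y <= x ->
     ks_kr_max r s y ('C(n, s) + 'C(m, s - 1)) /\
     canon_shift r s y = 'C(n, s) + 'C(m, s - 1)).
Proof.
move=> r2 rs hc _ ts _.
have [r3 [[er hle hrem hx hrem1] mn]] := canon_facts hc.
subst r; move: hle hrem hrem1 hx; rewrite !subSS !subn0 => hle hrem hrem1 hx.
have [s' es] : exists s', s = s'.+4 by exists (s - 4); lia.
subst s; move: ts; rewrite !subSS !subn0 => ts.
have key : exists l ub, [/\ valid l s'.+4 ub, size l + (s'.+4 - r3.+3) <= s'.+4,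
    bs l s'.+4 <= ('C(n, s'.+4) + 'C(m, s'.+3)).+1 & x < bs l r3.+3].
  have ht : 'C(t.+1, r3.+1) <= 'C(s'.+2, r3.+1) by apply: leq_bin2l; lia.
  have [ms|ms] := leqP s'.+3 m.
  - exists [:: n; m; s'.+2], n.+1; split.
    + rewrite /=; repeat (apply/andP; split); try lia; done.
    + rewrite /=; lia.
    + rewrite /= binn; lia.
    + rewrite /=; lia.
  have [ns|ns] := leqP s'.+4 n.
  - exists [:: n; s'.+3], n.+1; split.
    + rewrite /=; repeat (apply/andP; split); try lia; done.
    + rewrite /=; lia.
    + rewrite /= binn; lia.
    + rewrite /= binS; have := @leq_bin2l m s'.+2 r3.+2 ltac:(lia); lia.
  - exists [:: s'.+4], (s'.+4).+1; split.
    + rewrite /=; repeat (apply/andP; split); try lia; done.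
    + rewrite /=; lia.
    + rewrite /= binn; lia.
    + rewrite /= binS (binS s'.+2 r3.+1); have := @leq_bin2l m s'.+2 r3.+2 ltac:(lia).
      have := @leq_bin2l n s'.+3 r3.+3 ltac:(lia); lia.
have [l [ub [vl szl b1 b2]]] := key.
have upb : forall (T : finType) (e : rel T), kcl e r3.+3 <= x ->
    kcl e s'.+4 <= 'C(n, s'.+4) + 'C(m, s'.+3).
  move=> T e hk; rewrite leqNgt; apply/negP => big.
  have := @upper T e r3.+3 s'.+4 l ub vl szl ltac:(lia) ltac:(lia); lia.
have main : forall y : nat, 'C(n, r3.+3) + 'C(m, r3.+2) <= y -> y <= x ->
     ks_kr_max r3.+3 s'.+4 y ('C(n, s'.+4) + 'C(m, s'.+3)) /\
     canon_shift r3.+3 s'.+4 y = 'C(n, s'.+4) + 'C(m, s'.+3).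
  move=> y hy1 hy2; split.
  - split.
    + exists 'I_n.+1, (@eG n m); split; first exact: eG_simple.
      by rewrite !(kcl_eG mn).
    + move=> T e _ hk; apply: upb; lia.
  - rewrite /canon_shift /canon greedyS; case: eqP => [y0|y0].
      rewrite big_nil; subst y.
      have n0 : 'C(n, r3.+3) = 0 by lia.
      have m0 : 'C(m, r3.+2) = 0 by lia.
      move/eqP: n0; rewrite -leqn0 leqNgt bin_gt0 -ltnNge => n0.
      move/eqP: m0; rewrite -leqn0 leqNgt bin_gt0 -ltnNge => m0.
      rewrite !bin_small //; lia.
    rewrite (@maxbinomE r3.+3 y n); try lia.
    rewrite big_cons greedyS /=.
    have -> : r3.+3 + (s'.+4 - r3.+3) = s'.+4 by lia.
    case: eqP => [y10|y10].
      rewrite big_nil.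
      have m0 : 'C(m, r3.+2) = 0 by lia.
      move/eqP: m0; rewrite -leqn0 leqNgt bin_gt0 -ltnNge => m0.
      rewrite (@bin_small m s'.+3); lia.
    rewrite (@maxbinomE r3.+2 _ m); try lia.
    rewrite big_cons /=.
    have -> : r3.+2 + (s'.+4 - r3.+3) = s'.+3 by lia.
    have hs : y - 'C(n, r3.+3) - 'C(m, r3.+2) < 'C(t.+1, r3.+1).
      have := @leq_bin2l t t.+1 r3.+1 (leqnSn t); lia.
    have := greedy_small hs => /allP al.
    rewrite big_seq big1; first lia.
    move=> p /al /= hp; apply: bin_small; lia.
have mx := main x ltac:(lia) (leqnn x).
split; first exact: mx.
exact: main.
Qed.
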